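(* Let $G=(V,E)$ be a finite connected graph, $p$ a probability vector on $V$ with $p(i)>0$ for all $i$, and $M$ the transition matrix of the Markov chain on $S=(-\mathbb{N}_0)^V$ which moves from $x$ to $T_ix$ with probability $p(i)$. For each $i\in V$ fix an $i$-ordering, let $S_1=\{x^{(i)}:i\in V\}$, let $s=3(|V|-1)$, and let $\alpha'>0$ be such that $\inf_{x\in S,x'\in S_1}M^s(x,x')\ge\alpha'$. Let $\pi$ be an invariant probability distribution of $M$. Then for every $x\in S$, $$\|M^s(x,\cdot)-\pi\|_{TV}\le 1-(\alpha')^2|V|.$$
   Context: For $x\in S$ and $i\in V$, $T_ix\in S$ is obtained by first setting $x'_i=\max\{x_k:\operatorname{dist}(k,i)\le1\}+1$, $x'_j=x_j$ for $j\ne i$ (dist the graph distance), and then $(T_ix)_j=x'_j-\max_kx'_k$. An $i$-ordering is an enumeration $a^{(i)}=(a^{(i)}_1,\dots,a^{(i)}_{|V|-1})$ of $V\setminus\{i\}$ such that $a^{(i)}_1$ is a neighbour of $i$ and each $a^{(i)}_k$ is at graph distance $1$ from $\{i,a^{(i)}_1,\dots,a^{(i)}_{k-1}\}$. Let $S^{(i)}=\{y\in S:y_i=0\}$ and $x^{(i)}=T_{a^{(i)}_{|V|-1}}\cdots T_{a^{(i)}_1}y$ for $y\in S^{(i)}$ (e.g. $y\equiv0$). $\|\mu-\nu\|_{TV}=\sup_{B\subset S}|\mu(B)-\nu(B)|$. *)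

(* Defs.v *)
From HB Require Import structures.
From mathcomp Require Import all_boot all_order all_algebra.
From mathcomp Require Import all_classical all_reals all_analysis.
Set Implicit Arguments. Unset Strict Implicit. Unset Printing Implicit Defensive.
Import Order.TTheory GRing.Theory Num.Theory.
Local Open Scope ring_scope.
Local Open Scope classical_set_scope.

Definition simple_graph (V : finType) (adj : rel V) : Prop :=
  symmetric adj /\ irreflexive adj.
Definition connected_graph (V : finType) (adj : rel V) : Prop :=
  forall i j : V, connect adj i j.

Definition config (V : finType) := {ffun V -> int}.
Definition Sset (V : finType) : set (config V) :=
  [set x | forall j, x j <= 0].
Arguments Sset : clear implicits.

(* The map T_i. dist(k,i) <= 1 iff k = i or k adjacent to i. *)
Definition Tmap (V : finType) (adj : rel V) (i : V) (x : config V) : config V :=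
  let m := \big[Order.max/x i]_(k | adj i k) x k in
  let x' := [ffun j => if j == i then m + 1 else x j] in
  let M := \big[Order.max/x' i]_(k : V) x' k in
  [ffun j => x' j - M].

Definition Mker (R : realType) (V : finType) (adj : rel V) (p : V -> R)
  (x y : config V) : R :=
  \sum_(i : V | Tmap adj i x == y) p i.

(* n-step kernel M^n, via M^(n+1)(x,y) = sum_z M(x,z) M^n(z,y)
   = sum_i p(i) M^n(T_i x, y). *)
Fixpoint Mpow (R : realType) (V : finType) (adj : rel V) (p : V -> R)
  (n : nat) (x y : config V) : R :=
  match n with
  | 0 => if x == y then 1 else 0
  | n'.+1 => \sum_(i : V) p i * Mpow adj p n' (Tmap adj i x) y
  end.

(* i-ordering: an enumeration a_1..a_{|V|-1} of V \ {i} with a_1 a neighbour of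
   i and each a_k adjacent to (i.e. at distance 1 from) {i, a_1, ..., a_{k-1}}. *)
Definition i_ordering (V : finType) (adj : rel V) (i : V) (a : seq V) : Prop :=
  [/\ uniq a, (forall j, (j \in a) = (j != i)) &
      forall k, (k < size a)%N ->
        exists2 j, j \in i :: take k a & adj j (nth i a k)].

Definition xi_of (V : finType) (adj : rel V) (a : seq V) (y : config V) :
  config V := foldl (fun z j => Tmap adj j z) y a.

Definition mass (R : realType) (V : finType) (f : config V -> R)
  (B : set (config V)) : \bar R :=
  (\esum_(y in B) (f y)%:E)%R.

Definition tv_dist (R : realType) (V : finType) (f g : config V -> R) : \bar R :=
  ereal_sup [set `|(mass f B - mass g B)%E|%E | B in [set B | B `<=` Sset V]].

Definition invariant_prob (R : realType) (V : finType) (adj : rel V)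
  (p : V -> R) (pi : config V -> R) : Prop :=
  [/\ forall x, 0 <= pi x,
      forall x, ~ Sset V x -> pi x = 0,
      mass pi (Sset V) = 1%E &
      forall y, Sset V y ->
        (pi y)%:E = (\esum_(x in Sset V) (pi x * Mker adj p x y)%:E)%R].

(* Main.v *)
Require Import Defs.
From HB Require Import structures.
From mathcomp Require Import all_boot all_order all_algebra.
From mathcomp Require Import all_classical all_reals all_analysis.
From mathcomp Require Import lra zify.
Import Order.TTheory GRing.Theory Num.Theory.
Local Open Scope ring_scope.
Local Open Scope classical_set_scope.

Lemma Tmap_le0 (V : finType) (adj : rel V) i (x : config V) j :
  Tmap adj i x j <= 0.
Proof. rewrite /Tmap !ffunE subr_le0; apply: le_trans (le_bigmax _ _ j); by rewrite ffunE. Qed.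

Lemma xi_S (V : finType) (adj : rel V) a (y : config V) :
  Sset V y -> Sset V (xi_of adj a y).
Proof.
rewrite /xi_of; elim: a y => [|b a IH] y Hy //=.
by apply: IH => j; apply: Tmap_le0.
Qed.

Lemma Tmap_lt (V : finType) (adj : rel V) (sym : symmetric adj) i a
  (z : config V) P j0 :
  a != i -> (forall j, j \in P -> z i < z j) -> j0 \in i :: P -> adj j0 a ->
  forall j, j \in a :: P -> Tmap adj a z i < Tmap adj a z j.
Proof.
move=> ai HP Hj0 Ha j Hj; rewrite /Tmap !ffunE ltrD2r.
have ia : (i == a) = false by apply/negbTE; rewrite eq_sym.
rewrite ia.
have zj0 : z i <= z j0.
  move: Hj0; rewrite inE => /orP[/eqP->//|/HP/ltW//].
case: ifPn => [_|ja].
  have : z j0 <= \big[Order.max/z a]_(k | adj a k) z k.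
    by apply/bigmax_geP; right; exists j0 => //; rewrite sym.
  move=> h; lia.
by apply: HP; move: Hj; rewrite inE (negPf ja).
Qed.

Lemma fold_lt (V : finType) (adj : rel V) (sym : symmetric adj) i :
  forall r P (z : config V), (forall j, j \in P -> z i < z j) -> i \notin r ->
  (forall k, (k < size r)%N -> exists2 j, j \in i :: P ++ take k r & adj j (nth i r k)) ->
  forall j, j \in P ++ r ->
  (foldl (fun z j => Tmap adj j z) z r) i < (foldl (fun z j => Tmap adj j z) z r) j.
Proof.
elim=> [|a r IH] P z HP Hi Hk j Hj /=.
  by apply: HP; rewrite cats0 in Hj.
apply: (IH (rcons P a)).
- have [j0 Hj0 Ha] := Hk 0%N erefl.
  rewrite /= cats0 in Hj0.
  move=> j1; rewrite mem_rcons => Hj1.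
  apply: (@Tmap_lt V adj sym i a z P j0 _ HP Hj0 Ha) => //.
  by apply: contraNneq Hi => ->; rewrite inE eqxx.
- by apply: contra Hi; rewrite inE => ->; rewrite orbT.
- move=> k Hkr; have [j0 Hj0 Ha] := Hk k.+1 Hkr.
  by exists j0 => //; rewrite cat_rcons.
- by rewrite cat_rcons.
Qed.

Lemma xi_lt (V : finType) (adj : rel V) (sym : symmetric adj) i a (y : config V) :
  i_ordering adj i a -> forall j, j != i -> xi_of adj a y i < xi_of adj a y j.
Proof.
case=> _ Hmem Hk j ji; rewrite /xi_of.
apply: (@fold_lt _ _ sym i a [::]) => //.
- by rewrite Hmem eqxx.
- by rewrite /= Hmem.
Qed.

Lemma xi_inj (V : finType) (adj : rel V) (sym : symmetric adj) (ord : V -> seq V)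
  (y0 : V -> config V) :
  (forall i, i_ordering adj i (ord i)) ->
  injective (fun i => xi_of adj (ord i) (y0 i)).
Proof.
move=> Ho i j /= E; apply/eqP; apply/negPn/negP => ij.
have h1 := @xi_lt V adj sym i (ord i) (y0 i) (Ho i) j.
have h2 := @xi_lt V adj sym j (ord j) (y0 j) (Ho j) i.
rewrite E in h1.
have a : xi_of adj (ord j) (y0 j) i < xi_of adj (ord j) (y0 j) j by apply: h1; rewrite eq_sym.
have b := h2 ij.
by have := lt_trans a b; rewrite ltxx.
Qed.

Lemma sum_pred1_seq (R : realType) (T : eqType) (F : T -> R) (W : seq T) a :
  uniq W -> \sum_(w <- W) (if a == w then F w else 0) = if a \in W then F a else 0.
Proof.
elim: W => [|b W IH] /=; first by rewrite big_nil.
case/andP=> bW uW; rewrite big_cons IH // inE.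
case: (eqVneq a b) => [->|ab] /=; first by rewrite (negPf bW) addr0.
by rewrite add0r.
Qed.

Lemma Mpow_ge0 (R : realType) (V : finType) (adj : rel V) (p : V -> R) :
  (forall i, 0 <= p i) -> forall n x y, 0 <= Mpow adj p n x y.
Proof.
move=> p0; elim=> [|n IH] x y /=; first by case: ifP.
by apply: sumr_ge0 => i _; apply: mulr_ge0.
Qed.

Lemma Mpow_sum_le1 (R : realType) (V : finType) (adj : rel V) (p : V -> R) :
  (forall i, 0 <= p i) -> \sum_(i : V) p i = 1 ->
  forall n x (Z : seq (config V)), uniq Z -> \sum_(y <- Z) Mpow adj p n x y <= 1.
Proof.
move=> p0 p1; elim=> [|n IH] x Z uZ /=.
  rewrite sum_pred1_seq //; by case: ifP.
rewrite exchange_big /= -p1; apply: ler_sum => i _.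
rewrite -mulr_sumr -[leRHS]mulr1; apply: ler_wpM2l => //.
exact: IH.
Qed.

Lemma pi_Mpow (R : realType) (V : finType) (adj : rel V) (p : V -> R)
  (pi : config V -> R) :
  (forall i, 0 <= p i) -> (forall x, 0 <= pi x) ->
  (forall w, Sset V w -> forall Z, uniq Z -> (forall z, z \in Z -> Sset V z) ->
     \sum_(z <- Z) pi z * Mker adj p z w <= pi w) ->
  forall n y, Sset V y -> forall Z, uniq Z -> (forall z, z \in Z -> Sset V z) ->
     \sum_(z <- Z) pi z * Mpow adj p n z y <= pi y.
Proof.
move=> p0 pi0 Hinv; elim=> [|n IH] y Sy Z uZ SZ /=.
  under eq_bigr do rewrite (fun_if (fun t => pi _ * t)) mulr1 mulr0.
  have -> : \sum_(z <- Z) (if z == y then pi z else 0) =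
            \sum_(z <- Z) (if y == z then pi z else 0).
    by apply: eq_bigr => z _; rewrite eq_sym.
  by rewrite sum_pred1_seq //; case: ifP.
pose W := undup [seq Tmap adj i z | z <- Z, i <- index_enum V].
have uW : uniq W by apply: undup_uniq.
have SW : forall w, w \in W -> Sset V w.
  move=> w; rewrite mem_undup => /allpairsP [[z i] [_ _ ->]] j.
  exact: Tmap_le0.
have inW : forall z i, z \in Z -> Tmap adj i z \in W.
  by move=> z i zZ; rewrite mem_undup; apply: allpairs_f => //; apply: mem_index_enum.
apply: le_trans (IH y Sy W uW SW).
have -> : \sum_(z <- Z) pi z * (\sum_i p i * Mpow adj p n (Tmap adj i z) y) =
   \sum_(w <- W) Mpow adj p n w y * (\sum_(z <- Z) pi z * Mker adj p z w).
  symmetry.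
  transitivity (\sum_(w <- W) \sum_(z <- Z) \sum_i
      (if Tmap adj i z == w then Mpow adj p n w y * (pi z * p i) else 0)).
    apply: eq_bigr => w _; rewrite mulr_sumr; apply: eq_bigr => z _.
    rewrite /Mker mulr_sumr mulr_sumr big_mkcond /=.
    by apply: eq_bigr => i _; case: ifP.
  rewrite exchange_big /=; rewrite big_seq_cond [RHS]big_seq_cond.
  apply: eq_bigr => z /andP[zZ _].
  rewrite exchange_big mulr_sumr; apply: eq_bigr => i _.
  rewrite (@sum_pred1_seq R _ (fun w => Mpow adj p n w y * (pi z * p i)) W) // inW //.
  by rewrite mulrC mulrA.
rewrite big_seq [leRHS]big_seq; apply: ler_sum => w wW; rewrite [leRHS]mulrC; apply: ler_wpM2l; first exact: Mpow_ge0.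
by apply: Hinv => //; apply: SW.
Qed.

Lemma seq_le_esum (R : realType) (T : choiceType) (f : T -> R) (D : set T) (Z : seq T) :
  uniq Z -> (forall z, z \in Z -> D z) ->
  ((\sum_(z <- Z) f z)%:E <= \esum_(z in D) (f z)%:E)%E.
Proof.
move=> uZ ZD; apply: esum_ge; exists [set` Z].
  by split; [exact: finite_seq | move=> z /= zZ; exact: ZD].
by rewrite -sumEFin fsbig_seq.
Qed.

Lemma mass_bounds (R : realType) (V : finType) (h : config V -> R)
  (c : V -> config V) (a : R) (B : set (config V)) :
  (forall Z, uniq Z -> (forall z, z \in Z -> Sset V z) -> \sum_(z <- Z) h z <= 1) ->
  injective c -> (forall i, Sset V (c i)) -> (forall i, a <= h (c i)) ->
  B `<=` Sset V ->
  ((a * #|[pred i | c i \in B]|%:R)%:E <= mass h B)%E /\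
  (mass h B <= (1 - a * #|[pred i | c i \notin B]|%:R)%:E)%E.
Proof.
move=> Hsum cinj cS ha BS; split.
  have u1 : uniq [seq c i | i <- index_enum V & c i \in B].
    by rewrite map_inj_uniq // filter_uniq // index_enum_uniq.
  have m1 : forall z, z \in [seq c i | i <- index_enum V & c i \in B] -> B z.
    by move=> z /mapP [i]; rewrite mem_filter => /andP [iB _] ->; apply: set_mem.
  rewrite /mass; apply: le_trans (@seq_le_esum R _ h B _ u1 m1).
  rewrite lee_fin big_map big_filter.
  have -> : a * #|[pred i | c i \in B]|%:R = \sum_(i in [pred i | c i \in B]) a.
    by rewrite sumr_const mulr_natr.
  by apply: ler_sum => i _; apply: ha.
rewrite /mass /esum; apply: ge_ereal_sup => _ [F [finF FB] <-].
rewrite fsbig_finite // sumEFin lee_fin.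
pose Zf : seq (config V) := finmap.enum_fset (fset_set F).
set Zo := [seq c i | i <- index_enum V & c i \notin B].
have H := Hsum (Zf ++ Zo).
rewrite big_cat in H.
have H2 : a * #|[pred i | c i \notin B]|%:R <= \sum_(z <- Zo) h z.
  rewrite /Zo big_map big_filter.
  have -> : a * #|[pred i | c i \notin B]|%:R = \sum_(i in [pred i | c i \notin B]) a.
    by rewrite sumr_const mulr_natr.
  by apply: ler_sum => i _; apply: ha.
suff : \sum_(z <- Zf) h z + \sum_(z <- Zo) h z <= 1 by lra.
apply: H.
- rewrite cat_uniq finmap.fset_uniq /= map_inj_uniq // filter_uniq ?index_enum_uniq ?andbT //.
  apply/hasPn => z /mapP [i]; rewrite mem_filter => /andP [iB _] ->.
  rewrite /Zf in_fset_set //; apply/negP => /set_mem /FB /mem_set.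
  by rewrite (negPf iB).
- move=> z; rewrite mem_cat => /orP [].
    by rewrite /Zf in_fset_set // => /set_mem /FB /BS.
  by move=> /mapP [i] _ ->.
Qed.

Lemma abs_bound (R : realType) (m1 m2 : \bar R) (l u : R) :
  (l%:E <= m1 <= u%:E)%E -> (l%:E <= m2 <= u%:E)%E ->
  (`|(m1 - m2)%E|%E <= (u - l)%:E)%E.
Proof.
case: m1 => [r1| |]; rewrite ?leey ?leNye ?andbF ?andFb //.
case: m2 => [r2| |]; rewrite ?leey ?leNye ?andbF ?andFb //.
move=> /andP [h1 h2] /andP [h3 h4]; rewrite lee_fin in h1; rewrite lee_fin in h2; rewrite lee_fin in h3; rewrite lee_fin in h4.
have -> : (r1%:E - r2%:E)%E = (r1 - r2)%:E by [].
rewrite abse_EFin lee_fin.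
rewrite ler_norml; apply/andP; split; lra.
Qed.

Theorem mainTheorem6 (R : realType) (V : finType) (adj : rel V)
  (p : V -> R) (ord : V -> seq V) (y0 : V -> config V)
  (alpha' : R) (pi : config V -> R) :
  simple_graph adj -> connected_graph adj ->
  (forall i, 0 < p i) -> \sum_(i : V) p i = 1 ->
  (forall i, i_ordering adj i (ord i)) ->
  (forall i, Sset V (y0 i) /\ y0 i i = 0) ->
  0 < alpha' ->
  (forall x, Sset V x -> forall i,
     alpha' <= Mpow adj p (3 * (#|V| - 1)) x (xi_of adj (ord i) (y0 i))) ->
  invariant_prob adj p pi ->
  forall x, Sset V x ->
    (tv_dist (Mpow adj p (3 * (#|V| - 1)) x) pi
       <= (1 - alpha' ^+ 2 * #|V|%:R)%:E)%E.
Proof.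
move=> [sym _] _ Hp p1 Ho Hy0 a0 Hal [pi0 _ piS piinv] x Sx.
set s := (3 * (#|V| - 1))%N in Hal *.
pose c := fun i => xi_of adj (ord i) (y0 i).
have cinj : injective c := @xi_inj V adj sym ord y0 Ho.
have cS : forall i, Sset V (c i) by move=> i; apply: xi_S; case: (Hy0 i).
have p0 : forall i, 0 <= p i by move=> i; apply: ltW.
have hmu : forall Z, uniq Z -> (forall z, z \in Z -> Sset V z) ->
    \sum_(z <- Z) Mpow adj p s x z <= 1.
  by move=> Z uZ _; apply: Mpow_sum_le1.
have hpi : forall Z, uniq Z -> (forall z, z \in Z -> Sset V z) ->
    \sum_(z <- Z) pi z <= 1.
  by move=> Z uZ SZ; rewrite -lee_fin -piS; apply: seq_le_esum.
have Hinv : forall w, Sset V w -> forall Z, uniq Z -> (forall z, z \in Z -> Sset V z) ->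
     \sum_(z <- Z) pi z * Mker adj p z w <= pi w.
  by move=> w Sw Z uZ SZ; rewrite -lee_fin (piinv w Sw); apply: seq_le_esum.
have pic : forall i, alpha' <= pi (c i).
  move=> i.
  have key := @pi_Mpow R V adj p pi p0 pi0 Hinv s (c i) (cS i).
  have : (1 <= (pi (c i) / alpha')%:E)%E.
    rewrite -piS /mass /esum; apply: ge_ereal_sup => _ [F [finF FS] <-].
    rewrite fsbig_finite // sumEFin lee_fin ler_pdivlMr //.
    have SF : forall z, z \in finmap.enum_fset (fset_set F) -> Sset V z.
      by move=> z; rewrite in_fset_set // => /set_mem /FS.
    apply: le_trans (key _ (finmap.fset_uniq _) SF).
    rewrite mulr_suml big_seq [leRHS]big_seq; apply: ler_sum => z zF.
    by apply: ler_wpM2l => //; apply: Hal; apply: SF.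
  by rewrite lee_fin ler_pdivlMr // mul1r.
have muc : forall i, alpha' <= Mpow adj p s x (c i) by move=> i; apply: Hal.
have a1 : alpha' ^+ 2 * #|V|%:R <= alpha' * #|V|%:R.
  have [i _|V0] := pickP (fun _ : V => true).
    have : alpha' <= 1.
      apply: le_trans (muc i) _.
      by have := @Mpow_sum_le1 R V adj p p0 p1 s x [:: c i] erefl; rewrite big_seq1.
    move=> h; apply: ler_wpM2r => //; rewrite expr2 -[leRHS]mulr1.
    by apply: ler_wpM2l => //; apply: ltW.
  by rewrite (eq_card0 V0) mulr0 mulr0.
rewrite /tv_dist; apply: ge_ereal_sup => _ [B HB <-].
have [l1 u1] := @mass_bounds R V _ c alpha' B hmu cinj cS muc HB.
have [l2 u2] := @mass_bounds R V _ c alpha' B hpi cinj cS pic HB.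
have h := @abs_bound R _ _ _ _ (introT andP (conj l1 u1)) (introT andP (conj l2 u2)).
apply: (le_trans h).
rewrite lee_fin.
have kk : (#|[pred i | c i \in B]| + #|[pred i | c i \notin B]|)%N = #|V| := cardC _.
rewrite -kk natrD in a1 *.
lra.
Qed.
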